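(* Let $T=((\Omega,\mathcal{A}),\{(\Omega,\mathcal{M}_i)\}_{i\in N},\{t_i\}_{i\in N})$ be a type space, $I\subseteq N$, and $S\subseteq\Omega$ an $I$-common certainty component. Let $\mathcal{A}^S=\{F\cap S:F\in\mathcal{A}\}$, $\mathcal{M}_i^S=\{F\cap S:F\in\mathcal{M}_i\}$ for $i\in I$, and for $\omega\in S$, $i\in I$ let $t_i^S(\omega,\cdot)$ be the restriction of $t_i(\omega,\cdot)$ to $(S,\mathcal{A}^S)$, i.e. $t_i^S(\omega,F\cap S)=t_i(\omega,F)$ for $F\in\mathcal{A}$. Then $t_i^S$ is well defined and $((S,\mathcal{A}^S),\{(S,\mathcal{M}_i^S)\}_{i\in I},\{t_i^S\}_{i\in I})$ is a type space.
   Context: A field on a set $X$ is a collection of subsets of $X$ containing $X$ and closed under complements and finite intersections. For a field $\mathcal{A}$ on $\Omega$, $\mathrm{pba}(\Omega,\mathcal{A})$ is the set of finitely additive nonnegative $P:\mathcal{A}\to\mathbb{R}$ with $P(\Omega)=1$; $B(\Omega,\mathcal{A})$ the sup-norm closure of the linear span of indicators of sets in $\mathcal{A}$. A type space is $((\Omega,\mathcal{A}),\{(\Omega,\mathcal{M}_i)\}_{i\in N},\{t_i\}_{i\in N})$ with $N$ a nonempty set of players, fields $\mathcal{M}_i\subseteq\mathcal{A}$ on a set $\Omega$, and $t_i:\Omega\times\mathcal{A}\to[0,1]$ with: $t_i(\omega,\cdot)\in\mathrm{pba}(\Omega,\mathcal{A})$ for all $\omega$; $t_i(\cdot,E)\in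 B(\Omega,\mathcal{M}_i)$ for all $E\in\mathcal{A}$; $t_i(\omega,E)=1$ whenever $E\in\mathcal{M}_i$, $\omega\in E$. For $I\subseteq N$, a nonempty $S\subseteq\Omega$ (not necessarily in $\mathcal{A}$) is an $I$-common certainty component if there exists $E\in\mathcal{A}$ with $E\subseteq S$ and $t_i(\omega,E)=1$ for all $\omega\in S$, $i\in I$. *)

(* Defs.v *)
From mathcomp Require Import all_boot all_order all_algebra.
From mathcomp Require Import boolp classical_sets reals.
Set Implicit Arguments. Unset Strict Implicit. Unset Printing Implicit Defensive.
Import Order.TTheory GRing.Theory Num.Theory.
Local Open Scope classical_set_scope.
Local Open Scope ring_scope.

Definition is_field (X : Type) (F : set (set X)) : Prop :=
  [/\ F setT,
      (forall E, F E -> F (~` E)) &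
      (forall E G, F E -> F G -> F (E `&` G))].

Definition pba (R : realType) (X : Type) (F : set (set X)) (p : set X -> R) : Prop :=
  [/\ (forall E, F E -> 0 <= p E),
      (forall E G, F E -> F G -> E `&` G = set0 -> p (E `|` G) = p E + p G) &
      p setT = 1].

Definition indic_fun (R : realType) (X : Type) (E : set X) (x : X) : R :=
  if `[< E x >] then 1 else 0.

Definition simple_span (R : realType) (X : Type) (F : set (set X)) (g : X -> R) : Prop :=
  exists (n : nat) (c : 'I_n -> R) (E : 'I_n -> set X),
    (forall k, F (E k)) /\ (forall x, g x = \sum_(k < n) c k * @indic_fun R X (E k) x).

Definition in_B (R : realType) (X : Type) (F : set (set X)) (f : X -> R) : Prop :=
  forall eps : R, 0 < eps ->
    exists g, simple_span F g /\ (forall x, `|f x - g x| <= eps).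

(* Type space with state space the whole type Om, players N : set P,
   field A, fields M i (i in N), types t i : Om -> set Om -> R
   (only values on sets of A matter). *)
Definition type_space (R : realType) (Om P : Type) (N : set P)
    (A : set (set Om)) (M : P -> set (set Om)) (t : P -> Om -> set Om -> R) : Prop :=
  (exists i, N i) /\
  is_field A /\
  (forall i, N i -> is_field (M i) /\ M i `<=` A) /\
  (forall i, N i -> forall w, pba A (t i w)) /\
  (forall i, N i -> forall w E, A E -> 0 <= t i w E <= 1) /\
  (forall i, N i -> forall E, A E -> in_B (M i) (fun w => t i w E)) /\
  (forall i, N i -> forall E w, M i E -> E w -> t i w E = 1).

Definition common_certainty_component (R : realType) (Om P : Type)
    (A : set (set Om)) (t : P -> Om -> set Om -> R) (I : set P) (S : set Om) : Prop :=
  (exists w, S w) /\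
  exists E, [/\ A E, E `<=` S & forall w, S w -> forall i, I i -> t i w E = 1].

Definition trace_on (Om : Type) (F : set (set Om)) (S : set Om) : set (set {w : Om | S w}) :=
  [set G | exists2 E, F E & G = (@proj1_sig Om S) @^-1` E].

(* Main.v *)
Require Import Defs.
From mathcomp Require Import all_boot all_order all_algebra.
From mathcomp Require Import boolp classical_sets reals.
Import Order.TTheory GRing.Theory Num.Theory.
Local Open Scope classical_set_scope.
Local Open Scope ring_scope.

Section Aux.
Context (R : realType) (X : Type) (A : set (set X)) (p : set X -> R).
Hypothesis hA : is_field A.
Hypothesis hp : pba A p.

Lemma fU E G : A E -> A G -> A (E `|` G).
Proof.
move=> AE AG; have [_ hC hI] := hA.
have -> : E `|` G = ~` (~` E `&` ~` G) by rewrite -setCU setCK.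
by apply: (hC); apply: (hI) => //; apply: (hC).
Qed.

Lemma split_p F Y : A F -> A Y -> p F = p (F `&` Y) + p (F `&` ~` Y).
Proof.
move=> AF AY; have [_ hC hI] := hA; have [_ hadd _] := hp.
rewrite -hadd; [|by apply: (hI)|by apply: (hI) => //; apply: (hC)|].
- congr p; apply/seteqP; split => x /=.
  + by move=> Fx; case: (pselect (Y x)) => Yx; [left|right].
  + by case=> -[].
- by apply/seteqP; split => x //= [[_ ?] [_ ?]].
Qed.

Lemma wd (S E F G : set X) : A E -> E `<=` S -> p E = 1 -> A F -> A G ->
  F `&` S = G `&` S -> p F = p G.
Proof.
move=> AE ES pE AF AG FG.
have [hT hC hI] := hA; have [h0 hadd h1] := hp.
have pCE : p (~` E) = 0.
  have := split_p _ _ hT AE; rewrite setTI setTI h1 pE => e.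
  by apply: (@addrI _ 1); rewrite addr0 -e.
have z : forall H, A H -> p (H `&` ~` E) = 0.
  move=> H AH; apply/eqP; rewrite eq_le h0 ?andbT; last by apply: (hI) => //; apply: (hC).
  have := split_p _ _ (hC _ AE) AH; rewrite pCE => e.
  rewrite setIC; apply: (@le_trans _ _ (p (~` E `&` H) + p (~` E `&` ~` H))).
    by rewrite lerDl h0 //; apply: (hI) => //; apply: (hC).
  by rewrite -e.
rewrite (split_p _ _ AF AE) (split_p _ _ AG AE) !z // !addr0.
congr p; apply/seteqP; split => x /= [Hx Ex].
- have : (F `&` S) x by split => //; apply: (ES).
  by rewrite FG => -[].
- have : (G `&` S) x by split => //; apply: (ES).
  by rewrite -FG => -[].
Qed.
End Aux.

Theorem proposition2 (R : realType) (Om P : Type) (N : set P)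
    (A : set (set Om)) (M : P -> set (set Om)) (t : P -> Om -> set Om -> R)
    (I : set P) (S : set Om) :
  type_space N A M t ->
  I `<=` N -> (exists i, I i) ->
  common_certainty_component A t I S ->
  (* t_i^S is well defined *)
  (forall i, I i -> forall w, S w -> forall F G, A F -> A G ->
     F `&` S = G `&` S -> t i w F = t i w G) /\
  (exists tS : P -> {w : Om | S w} -> set {w : Om | S w} -> R,
     forall i, I i -> forall w F, A F ->
       tS i w ((@proj1_sig Om S) @^-1` F) = t i (proj1_sig w) F) /\
  (* the restricted structure is a type space *)
  (forall tS : P -> {w : Om | S w} -> set {w : Om | S w} -> R,
     (forall i, I i -> forall w F, A F ->
        tS i w ((@proj1_sig Om S) @^-1` F) = t i (proj1_sig w) F) ->
     @type_space R {w : Om | S w} P I (@trace_on Om A S) (fun i => @trace_on Om (M i) S) tS).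
Proof.
move=> [_ [hA [hM [hpba [h01 [hB hcert]]]]]] IN exI [_ [E [AE ES tE]]].
have WD : forall i, I i -> forall w, S w -> forall F G, A F -> A G ->
     F `&` S = G `&` S -> t i w F = t i w G.
  move=> i Ii w Sw F G AF AG FG.
  exact: (@wd R Om A (t i w) hA (hpba i (IN i Ii) w) S E F G AE ES (tE w Sw i Ii) AF AG FG).
have pre : forall F G, (@proj1_sig Om S) @^-1` F = (@proj1_sig Om S) @^-1` G ->
    F `&` S = G `&` S.
  move=> F G e; apply/seteqP; split => x /= [Hx Sx]; split => //.
  - have : ((@proj1_sig Om S) @^-1` F) (exist _ x Sx) by [].
    by rewrite e.
  - have : ((@proj1_sig Om S) @^-1` G) (exist _ x Sx) by [].
    by rewrite -e.
split => //; split.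
  pose tS := fun i (w : {w : Om | S w}) (H : set {w : Om | S w}) =>
    match pselect (exists F, A F /\ H = (@proj1_sig Om S) @^-1` F) with
    | left h => t i (proj1_sig w) (proj1_sig (cid h))
    | right _ => 0 end.
  exists tS => i Ii w F AF; rewrite /tS.
  case: pselect => [h|]; last by move=> []; exists F.
  case: (cid h) => F' [AF' e] /=.
  apply: (WD i Ii _ (proj2_sig w)) => //.
  exact: (pre).
move=> tS htS.
have trf : forall F : set (set Om), is_field F -> is_field (@trace_on Om F S).
  move=> F [hT hC hI]; split.
  - by exists setT.
  - by move=> _ [H FH ->]; exists (~` H) => //; apply: (hC).
  - by move=> _ _ [H FH ->] [H' FH' ->]; exists (H `&` H') => //; apply: (hI).
split => //; split; first exact: trf.
split.
  move=> i Ii; have [fM MA] := hM i (IN i Ii); split; first exact: trf.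
  by move=> _ [H MH ->]; exists H => //; apply: (MA).
split.
  move=> i Ii w; have [p0 padd p1] := hpba i (IN i Ii) (proj1_sig w).
  have [hT hC hI] := hA.
  split.
  - by move=> _ [H AH ->]; rewrite htS //; apply: (p0).
  - move=> _ _ [H AH ->] [H' AH' ->] disj.
    have AH'' : A (H' `&` ~` H) by apply: (hI) => //; apply: (hC).
    have e' : (@proj1_sig Om S) @^-1` H' = (@proj1_sig Om S) @^-1` (H' `&` ~` H).
      apply/seteqP; split => x /=; last by case.
      move=> Hx; split => // Hx'.
      have : ((@proj1_sig Om S) @^-1` H `&` (@proj1_sig Om S) @^-1` H') x by [].
      by rewrite disj.
    have eU : (@proj1_sig Om S) @^-1` H `|` (@proj1_sig Om S) @^-1` H' =
              (@proj1_sig Om S) @^-1` (H `|` (H' `&` ~` H)).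
      by rewrite e' preimage_setU.
    rewrite eU e' !htS //; last by apply: (fU).
    rewrite padd //; apply/seteqP; split => x //= [? [_ ?]]; by [].
  - have -> : [set: {w : Om | S w}] = (@proj1_sig Om S) @^-1` setT by [].
    by rewrite htS.
split.
  by move=> i Ii w _ [H AH ->]; rewrite htS //; apply: (h01) => //; apply: (IN).
split.
  move=> i Ii _ [H AH ->] eps eps0.
  have [g [[n [c [Ek [MEk hg]]]] bnd]] := hB i (IN i Ii) H AH eps eps0.
  exists (fun w => g (proj1_sig w)); split.
    exists n, c, (fun k => (@proj1_sig Om S) @^-1` Ek k); split.
      by move=> k; exists (Ek k).
    by move=> w; rewrite hg; apply: eq_bigr => k _.
  by move=> w /=; rewrite htS.
move=> i Ii _ w [H MH ->] Hw.
have [_ MA] := hM i (IN i Ii).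
by rewrite htS //; [apply: (hcert) => //; apply: (IN) | apply: MA].
Qed.
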